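(* Let $q=p^m$ with $p$ an odd prime and $m\ge1$, and suppose $q\equiv 1\pmod 6$. Then the power function $f(x)=x^{q+2}$ on $\mathbb{F}_{q^2}$ satisfies $\beta_f\le 5$.
   Context: For $f:\mathbb{F}_{q^2}\to\mathbb{F}_{q^2}$ and $a,b\in\mathbb{F}_{q^2}$, $\beta_f(a,b)$ is the number of $(x,y)\in\mathbb{F}_{q^2}^2$ with $f(x)-f(y)=b$ and $f(x+a)-f(y+a)=b$; the boomerang uniformity is $\beta_f=\max_{a,b\in\mathbb{F}_{q^2}^*}\beta_f(a,b)$. *)

(* Defs.v *)
From mathcomp Require Import all_boot all_algebra all_field.
Set Implicit Arguments. Unset Strict Implicit. Unset Printing Implicit Defensive.
Import GRing.Theory.
Local Open Scope ring_scope.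

Definition boomerang_count (F : finFieldType) (f : F -> F) (a b : F) : nat :=
  #|[set xy : F * F | (f xy.1 - f xy.2 == b) && (f (xy.1 + a) - f (xy.2 + a) == b)]|.

Definition boomerang_uniformity (F : finFieldType) (f : F -> F) : nat :=
  \max_(ab : F * F | (ab.1 != 0) && (ab.2 != 0)) boomerang_count f ab.1 ab.2.

(* Main.v *)
Require Import Defs.
From mathcomp Require Import all_boot all_algebra all_field.
From mathcomp Require Import ring.
Set Implicit Arguments. Unset Strict Implicit. Unset Printing Implicit Defensive.
Import GRing.Theory.
Local Open Scope ring_scope.

Section Main.
Variables (F : finFieldType) (q : nat).
Hypothesis sD : forall x y : F, (x + y) ^+ q = x ^+ q + y ^+ q.
Hypothesis sI : forall x : F, (x ^+ q) ^+ q = x.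
Hypothesis q3 : (q %% 3 = 1)%N.
Hypothesis two0 : (2%:R : F) != 0.
Hypothesis three0 : (3%:R : F) != 0.

Lemma qgt0 : (0 < q)%N.
Proof. by case: q q3. Qed.

Lemma s0 : (0 : F) ^+ q = 0.
Proof. by rewrite expr0n; case: q q3. Qed.

Lemma sN (x : F) : (- x) ^+ q = - x ^+ q.
Proof. by apply/eqP; rewrite -subr_eq0 opprK -sD addNr s0. Qed.

Lemma sB (x y : F) : (x - y) ^+ q = x ^+ q - y ^+ q.
Proof. by rewrite sD sN. Qed.

Lemma sP (z : F) : (z ^+ q * z ^+ 2) ^+ q = z * (z ^+ q) ^+ 2.
Proof. by rewrite exprMn sI exprAC. Qed.

Lemma s_eq0 (z : F) : (z ^+ q == 0) = (z == 0).
Proof. by rewrite expf_eq0 qgt0. Qed.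

Lemma rq (r : F) : r ^+ 3 = 1 -> r ^+ q = r.
Proof.
by move=> h; rewrite (divn_eq q 3) q3 exprD mulnC exprM h expr1n mul1r expr1.
Qed.

Lemma count_le5 (a b : F) : a != 0 -> b != 0 ->
  (boomerang_count (fun x : F => x ^+ (q + 2)) a b <= 5)%N.
Proof.
move=> a0 b0.
set ab := a ^+ q; set bb := b ^+ q.
have ab0 : ab != 0 by rewrite s_eq0.
set n0 := b - ab * a ^+ 2; set n1 := - (2%:R * ab * a); set n2 := - ab.
set P : {poly F} := Poly [:: - bb * a ^+ 4 + a * b ^+ 2;
   n0 ^+ 2 + b ^+ 2 - 4%:R * bb * a ^+ 3;
   2%:R * n0 * n1 - 8%:R * bb * a ^+ 2 + 2%:R * a * b * ab;
   n1 ^+ 2 + 2%:R * n0 * n2 + 2%:R * b * ab - 8%:R * bb * a;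
   2%:R * n1 * n2 - 4%:R * bb + a * ab ^+ 2;
   2%:R * ab ^+ 2].
have P0 : P != 0.
  apply/eqP => h; have := coef_Poly [:: - bb * a ^+ 4 + a * b ^+ 2;
   n0 ^+ 2 + b ^+ 2 - 4%:R * bb * a ^+ 3;
   2%:R * n0 * n1 - 8%:R * bb * a ^+ 2 + 2%:R * a * b * ab;
   n1 ^+ 2 + 2%:R * n0 * n2 + 2%:R * b * ab - 8%:R * bb * a;
   2%:R * n1 * n2 - 4%:R * bb + a * ab ^+ 2;
   2%:R * ab ^+ 2] 5.
  rewrite -/P h coef0 /= => /esym/eqP; rewrite mulf_eq0 (negbTE two0) /=.
  by rewrite expf_eq0 /= (negbTE ab0).
have szP : (size P <= 6)%N by apply: size_Poly.
have key : forall x y : F,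
    x ^+ (q + 2) - y ^+ (q + 2) = b ->
    (x + a) ^+ (q + 2) - (y + a) ^+ (q + 2) = b ->
    y = - x - a /\ root P x.
  move=> x y; rewrite !exprD => H1 H2.
  have Hc1 := congr1 (fun z => z ^+ q) H1; have Hc2 := congr1 (fun z => z ^+ q) H2.
  rewrite /= sB !sP -/bb in Hc1; rewrite /= sB !sP !sD -/bb -/ab in Hc2.
  rewrite !sD -/ab in H2.
  set xb := x ^+ q in H1 H2 Hc1 Hc2; set yb := y ^+ q in H1 H2 Hc1 Hc2.
  have E : a * ((x + y + a) * (xb - yb) + (x - y) * (xb + yb + ab))
           + ab * (x + y + a) * (x - y) = 0.
    transitivity ((1:F) * (((xb + ab) * (x + a) ^+ 2 - (yb + ab) * (y + a) ^+ 2)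
                     - (xb * x ^+ 2 - yb * y ^+ 2))); first ring.
    by rewrite H1 H2 subrr mulr0.
  have Eb : ab * ((xb + yb + ab) * (x - y) + (xb - yb) * (x + y + a))
           + a * (xb + yb + ab) * (xb - yb) = 0.
    transitivity ((1:F) * (((x + a) * (xb + ab) ^+ 2 - (y + a) * (yb + ab) ^+ 2)
                     - (x * xb ^+ 2 - y * yb ^+ 2))); first ring.
    by rewrite Hc1 Hc2 subrr mulr0.
  have hD : x - y != 0.
    apply: contraNneq b0 => /eqP; rewrite subr_eq0 => /eqP exy.
    by rewrite -H1 /yb -exy subrr.
  have hDb : xb - yb != 0 by rewrite /xb /yb -sB s_eq0.
  have hS : x + y + a = 0.
    apply/eqP; apply: contraNT three0 => hS0.
    have hSb : xb + yb + ab != 0 by rewrite /xb /yb /ab -!sD s_eq0.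
    have e1 : (x + y + a) * (a * (xb - yb) + ab * (x - y)) + a * (x - y) * (xb + yb + ab) = 0.
      by rewrite -E; ring.
    have e2 : (xb + yb + ab) * (a * (xb - yb) + ab * (x - y)) + ab * (xb - yb) * (x + y + a) = 0.
      by rewrite -Eb; ring.
    have e3 : (x + y + a) * (xb + yb + ab) * ((a * (xb - yb) + ab * (x - y)) ^+ 2 - (a * (xb - yb)) * (ab * (x - y))) = 0.
      transitivity (((x + y + a) * (a * (xb - yb) + ab * (x - y)) + a * (x - y) * (xb + yb + ab)) * ((xb + yb + ab) * (a * (xb - yb) + ab * (x - y)))
        - a * (x - y) * (xb + yb + ab) * ((xb + yb + ab) * (a * (xb - yb) + ab * (x - y)) + ab * (xb - yb) * (x + y + a))); first ring.
      by rewrite e1 e2; ring.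
    move/eqP: e3; rewrite !mulf_eq0 (negbTE hS0) (negbTE hSb) /= => /eqP e3.
    set u := a * (xb - yb) in e3; set ub := ab * (x - y) in e3.
    have u0 : u != 0 by rewrite mulf_neq0.
    have ub0 : ub != 0 by rewrite mulf_neq0.
    have hu : u ^+ 2 + u * ub + ub ^+ 2 = 0.
      by rewrite -[RHS]e3; ring.
    set r := u / ub.
    have hr : r ^+ 2 + r + 1 = 0.
      have -> : r ^+ 2 + r + 1 = (u ^+ 2 + u * ub + ub ^+ 2) / ub ^+ 2.
        by rewrite /r; field.
      by rewrite hu mul0r.
    have r3 : r ^+ 3 = 1.
      apply/eqP; rewrite -subr_eq0; apply/eqP.
      transitivity ((r - 1) * (r ^+ 2 + r + 1)); first ring.
      by rewrite hr mulr0.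
    have rs : r ^+ q = ub / u.
      rewrite /r exprMn exprVn /u /ub !exprMn sB sI -/xb -/yb -/ab.
      by rewrite /xb /yb sI sI -sB.
    have r0 : r != 0 by rewrite mulf_neq0 ?invr_eq0.
    have rr : r * r = 1.
      rewrite -{1}(rq r3) rs /r mulrC mulrA divfK //.
      by rewrite divff.
    have r1 : r = 1.
      by rewrite -[LHS]mul1r -[in LHS]rr -expr2 -exprSr.
    apply/eqP; rewrite -hr r1; ring.
  have hy : y = - x - a.
    by apply/eqP; rewrite -subr_eq0 opprB addrA addrC addrA; apply/eqP; rewrite -hS; ring.
  have hyb : yb = - xb - ab by rewrite /yb hy sB sN.
  rewrite hy hyb in H1 Hc1.
  have HN : xb * (x ^+ 2 + (x + a) ^+ 2) = b - ab * (x + a) ^+ 2.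
    by rewrite -H1; ring.
  have Hc : x * (xb ^+ 2 + (xb + ab) ^+ 2) = bb - a * (xb + ab) ^+ 2.
    by rewrite -Hc1; ring.
  split => //.
  rewrite /root horner_Poly /=; apply/eqP.
  pose Dx := x ^+ 2 + (x + a) ^+ 2.
  transitivity (x * ((xb * Dx) ^+ 2 + (xb * Dx + ab * Dx) ^+ 2) - bb * Dx ^+ 2
     + a * (xb * Dx + ab * Dx) ^+ 2).
    rewrite /Dx HN /n0 /n1 /n2; ring.
  transitivity (Dx ^+ 2 * (x * (xb ^+ 2 + (xb + ab) ^+ 2) - bb + a * (xb + ab) ^+ 2)); first ring.
  by rewrite Hc; ring.
rewrite /boomerang_count.
set S := [set xy : F * F | _].
set R := [set x : F | root P x].
have sub : S \subset [set (x, - x - a) | x in R].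
  apply/subsetP => -[x y]; rewrite inE /= => /andP [/eqP h1 /eqP h2].
  have [-> hr] := key x y h1 h2.
  by apply/imsetP; exists x => //; rewrite inE.
have cR : (#|R| < size P)%N.
  rewrite cardE; apply: max_poly_roots => //; last exact: enum_uniq.
  by apply/allP => z; rewrite mem_enum inE.
apply: leq_trans (subset_leq_card sub) _.
apply: leq_trans (leq_imset_card _ _) _.
by rewrite -ltnS; apply: leq_trans cR szP.
Qed.
End Main.

Theorem proposition7 (p m : nat) (F : finFieldType) :
  prime p -> odd p -> (0 < m)%N ->
  ((p ^ m) %% 6 = 1)%N ->
  #|F| = ((p ^ m) ^ 2)%N ->
  (boomerang_uniformity (fun x : F => x ^+ (p ^ m + 2)%N) <= 5)%N.
Proof.
move=> pp podd m0 h6 HF.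
have pcharFp : p \in [pchar F].
  by apply: (card_finPcharP (n := (m * 2)%N)) => //; rewrite HF expnM.
have nd6 : ~~ (p %| 6)%N.
  apply/negP => d6.
  have dq : (p %| p ^ m)%N by apply: dvdn_exp.
  move: dq; rewrite {1}(divn_eq (p ^ m) 6) h6 dvdn_addr; last first.
    by apply: dvdn_mull.
  by rewrite dvdn1 => /eqP p1; move: pp; rewrite p1.
have two0 : (2%:R : F) != 0.
  rewrite -(dvdn_pcharf pcharFp); apply: contra nd6 => d2.
  by apply: dvdn_trans d2 _.
have three0 : (3%:R : F) != 0.
  rewrite -(dvdn_pcharf pcharFp); apply: contra nd6 => d2.
  by apply: dvdn_trans d2 _.
have q3 : ((p ^ m) %% 3 = 1)%N.
  by rewrite -(modn_dvdm (p ^ m) (isT : (3 %| 6)%N)) h6.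
have sD : forall x y : F, (x + y) ^+ (p ^ m) = x ^+ (p ^ m) + y ^+ (p ^ m).
  move=> x y; apply: exprDn_pchar.
  by rewrite pnatX (pnatE _ pp) pcharFp.
have sI : forall x : F, (x ^+ (p ^ m)) ^+ (p ^ m) = x.
  by move=> x; rewrite -exprM mulnn -HF expf_card.
apply/bigmax_leqP => -[a b] /andP [a0 b0] /=.
exact: count_le5.
Qed.
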